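(* Let $(m_j)_{j=1}^{\infty}$ be a strictly increasing sequence of positive integers with $m_{j+1}\ge q\,m_j$ for all $j$, where $q\ge 3$. Let $A_j>0$, $B_j\in\mathbb{C}$ with $A_j^2-|B_j|^2=1$, and let $M,N\in\mathbb{N}$ with $M<N$. Define the trigonometric polynomial $b_{M,N}$ as the upper-right entry of $$\prod_{j=M+1}^{N}\begin{bmatrix} A_j & B_j e^{2\pi i m_j t}\\ \overline{B_j}e^{-2\pi i m_j t} & A_j\end{bmatrix}$$ (factors in increasing order of $j$ from left to right), and write $b_{M,N}(t)=\sum_{n\in F}D_n e^{2\pi i n t}$, where $F\subseteq\mathbb{Z}$ is the set of frequencies at which the Fourier coefficient $D_n$ of $b_{M,N}$ is nonzero. Then $$\sum_{n\in\mathbb{Z}}\Big|\sum_{\substack{n_1,n_2\in F\\ n_2-n_1=n}}D_{n_1}\overline{D_{n_2}}\Big|^2\le e^{8\sum_{j=M+1}^{N}|B_j|^2}.$$ *)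

(* Defs.v *)
From Stdlib Require Import Reals ZArith List.
From Coquelicot Require Import Coquelicot.
Import ListNotations.
Open Scope R_scope.

Definition cexpi (x : R) : C := (cos x, sin x).

Record mat2 := Mat2 { m11 : C; m12 : C; m21 : C; m22 : C }.

Definition mat2_id : mat2 := Mat2 (RtoC 1) (RtoC 0) (RtoC 0) (RtoC 1).

Definition mat2_mul (X Y : mat2) : mat2 :=
  Mat2 (Cplus (Cmult (m11 X) (m11 Y)) (Cmult (m12 X) (m21 Y)))
       (Cplus (Cmult (m11 X) (m12 Y)) (Cmult (m12 X) (m22 Y)))
       (Cplus (Cmult (m21 X) (m11 Y)) (Cmult (m22 X) (m21 Y)))
       (Cplus (Cmult (m21 X) (m12 Y)) (Cmult (m22 X) (m22 Y))).

Definition factor (m : nat -> nat) (A : nat -> R) (B : nat -> C) (j : nat) (t : R)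
  : mat2 :=
  Mat2 (RtoC (A j))
       (Cmult (B j) (cexpi (2 * PI * INR (m j) * t)))
       (Cmult (Cconj (B j)) (cexpi (- (2 * PI * INR (m j) * t))))
       (RtoC (A j)).

(* prod_from M k t = factor (M+1) * factor (M+2) * ... * factor (M+k)
   (increasing j from left to right) *)
Fixpoint prod_from (m : nat -> nat) (A : nat -> R) (B : nat -> C) (M k : nat) (t : R)
  : mat2 :=
  match k with
  | O => mat2_id
  | S k' => mat2_mul (prod_from m A B M k' t) (factor m A B (M + k' + 1) t)
  end.

Definition b_MN (m : nat -> nat) (A : nat -> R) (B : nat -> C) (M N : nat) (t : R) : C :=
  m12 (prod_from m A B M (N - M) t).

Definition Csum {T} (L : list T) (f : T -> C) : C :=
  fold_right (fun x acc => Cplus (f x) acc) (RtoC 0) L.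
Definition Rsum {T} (L : list T) (f : T -> R) : R :=
  fold_right (fun x acc => f x + acc) 0 L.

Definition autocorr (F : list Z) (D : Z -> C) (n : Z) : C :=
  Csum F (fun n1 => Csum F (fun n2 =>
    if Z.eqb (n2 - n1)%Z n then Cmult (D n1) (Cconj (D n2)) else RtoC 0)).

Definition sumB2 (B : nat -> C) (M N : nat) : R :=
  Rsum (seq (S M) (N - M)) (fun j => Cmod (B j) ^ 2).

(* Main.v *)
Require Import Defs.
From Stdlib Require Import Reals ZArith List Lra Lia Nsatz.
From Coquelicot Require Import Coquelicot.
Import ListNotations.
Open Scope R_scope.

Definition E (k : Z) (t : R) : C := cexpi (2 * PI * IZR k * t).
Definition tp := list (Z * C).
Fixpoint ev (p : tp) (t : R) : C :=
  match p with [] => RtoC 0 | (k, c) :: p' => Cplus (Cmult c (E k t)) (ev p' t) end.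
Definition tscale (c : C) (p : tp) : tp := map (fun x => (fst x, Cmult c (snd x))) p.
Definition tshift (m : Z) (p : tp) : tp := map (fun x => (fst x + m, snd x)%Z) p.
Definition tconj (p : tp) : tp := map (fun x => (- fst x, Cconj (snd x))%Z) p.
Definition tmul (p q : tp) : tp :=
  flat_map (fun x => map (fun y => (fst x + fst y, Cmult (snd x) (snd y))%Z) q) p.
Fixpoint mean (p : tp) : C :=
  match p with [] => RtoC 0 | (k, c) :: p' => Cplus (if Z.eqb k 0 then c else RtoC 0) (mean p') end.

Lemma E_add k l t : E (k + l) t = Cmult (E k t) (E l t).
Proof.
  unfold E, cexpi. rewrite plus_IZR.
  replace (2 * PI * (IZR k + IZR l) * t) with (2 * PI * IZR k * t + 2 * PI * IZR l * t) by ring.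
  rewrite cos_plus, sin_plus. unfold Cmult; simpl. f_equal; ring.
Qed.

Lemma E_opp k t : E (- k) t = Cconj (E k t).
Proof.
  unfold E, cexpi, Cconj. rewrite opp_IZR.
  replace (2 * PI * - IZR k * t) with (- (2 * PI * IZR k * t)) by ring.
  rewrite cos_neg, sin_neg. reflexivity.
Qed.

Lemma ev_app p q t : ev (p ++ q) t = Cplus (ev p t) (ev q t).
Proof. induction p as [|[k c] p IH]; simpl. ring. rewrite IH. ring. Qed.

Lemma ev_scale c p t : ev (tscale c p) t = Cmult c (ev p t).
Proof. induction p as [|[k d] p IH]; simpl. ring. rewrite IH. ring. Qed.

Lemma ev_shift m p t : ev (tshift m p) t = Cmult (E m t) (ev p t).
Proof. induction p as [|[k d] p IH]; simpl. ring. rewrite IH, E_add. ring. Qed.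

Lemma Cconj_plus' (x y : C) : Cconj (Cplus x y) = Cplus (Cconj x) (Cconj y).
Proof. destruct x, y; unfold Cconj, Cplus; simpl; f_equal; ring. Qed.
Lemma Cconj_mult' (x y : C) : Cconj (Cmult x y) = Cmult (Cconj x) (Cconj y).
Proof. destruct x, y; unfold Cconj, Cmult; simpl; f_equal; ring. Qed.

Lemma ev_conj p t : ev (tconj p) t = Cconj (ev p t).
Proof.
  induction p as [|[k d] p IH]; simpl.
  unfold Cconj, RtoC; simpl; f_equal; ring.
  rewrite IH, E_opp, Cconj_plus', Cconj_mult'. reflexivity.
Qed.

Lemma ev_mul p q t : ev (tmul p q) t = Cmult (ev p t) (ev q t).
Proof.
  induction p as [|[k c] p IH]; simpl. ring.
  rewrite ev_app. fold (tmul p q). rewrite IH.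
  assert (H : ev (map (fun y => (k + fst y, Cmult c (snd y)))%Z q) t = Cmult (Cmult c (E k t)) (ev q t)).
  { clear IH. induction q as [|[l d] q IHq]; simpl. ring. rewrite IHq, E_add. ring. }
  rewrite H. ring.
Qed.

Lemma mean_app p q : mean (p ++ q) = Cplus (mean p) (mean q).
Proof. induction p as [|[k c] p IH]; simpl. ring. rewrite IH. ring. Qed.

Lemma mean_scale c p : mean (tscale c p) = Cmult c (mean p).
Proof. induction p as [|[k d] p IH]; simpl. ring. rewrite IH. destruct (Z.eqb k 0); ring. Qed.

Definition allf (P : Z -> Prop) (p : tp) := forall x, In x p -> P (fst x).

Lemma mean_nz p : allf (fun k => k <> 0%Z) p -> mean p = RtoC 0.
Proof.
  induction p as [|[k c] p IH]; simpl; intros H. reflexivity.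
  rewrite IH. destruct (Z.eqb_spec k 0).
  exfalso. apply (H (k,c)); simpl; auto.
  ring. intros x Hx; apply H; simpl; auto.
Qed.

Lemma allf_app P p q : allf P p -> allf P q -> allf P (p ++ q).
Proof. intros H1 H2 x Hx. apply in_app_or in Hx. destruct Hx; auto. Qed.
Lemma allf_scale P c p : allf P p -> allf P (tscale c p).
Proof. intros H x Hx. unfold tscale in Hx. apply in_map_iff in Hx. destruct Hx as [y [<- Hy]]. simpl. apply H; auto. Qed.
Lemma allf_shift (P Q : Z -> Prop) m p : allf P p -> (forall k, P k -> Q (k + m)%Z) -> allf Q (tshift m p).
Proof. intros H HPQ x Hx. unfold tshift in Hx. apply in_map_iff in Hx. destruct Hx as [y [<- Hy]]. simpl. apply HPQ, H; auto. Qed.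
Lemma allf_conj (P Q : Z -> Prop) p : allf P p -> (forall k, P k -> Q (- k)%Z) -> allf Q (tconj p).
Proof. intros H HPQ x Hx. unfold tconj in Hx. apply in_map_iff in Hx. destruct Hx as [y [<- Hy]]. simpl. apply HPQ, H; auto. Qed.
Lemma allf_mul (P Q S : Z -> Prop) p q : allf P p -> allf Q q -> (forall k l, P k -> Q l -> S (k + l)%Z) -> allf S (tmul p q).
Proof.
  intros H1 H2 H x Hx. unfold tmul in Hx. apply in_flat_map in Hx. destruct Hx as [y [Hy Hx]].
  apply in_map_iff in Hx. destruct Hx as [z [<- Hz]]. simpl. apply H; auto.
Qed.
Lemma allf_weak (P Q : Z -> Prop) p : allf P p -> (forall k, P k -> Q k) -> allf Q p.
Proof. intros H HPQ x Hx. apply HPQ, H; auto. Qed.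

Lemma sin_2PIk k : sin (2 * PI * IZR k) = 0.
Proof. apply sin_eq_0_1. exists (2 * k)%Z. rewrite mult_IZR. ring. Qed.
Lemma cos_2PIk k : cos (2 * PI * IZR k) = 1.
Proof.
  replace (2 * PI * IZR k) with (2 * (PI * IZR k)) by ring.
  rewrite cos_2a_sin. rewrite (sin_eq_0_1 (PI * IZR k)). ring.
  exists k. ring.
Qed.

Lemma is_RInt_term k c :
  is_RInt (fun t => Re (Cmult c (E k t))) 0 1 (Re (if Z.eqb k 0 then c else RtoC 0)).
Proof.
  destruct (Z.eqb_spec k 0) as [->|Hk].
  - replace (Re c) with (scal (1 - 0) (Re c)).
    2: { rewrite Rminus_0_r. apply (scal_one (V:=R_NormedModule)). }
    eapply is_RInt_ext.
    2: { apply (is_RInt_const 0 1 (Re c)). }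
    intros x _. unfold E, cexpi, Re. simpl. rewrite Rmult_0_r, Rmult_0_l, cos_0, sin_0. ring.
  - set (w := 2 * PI * IZR k).
    assert (Hw : w <> 0).
    { unfold w. assert (HP : PI > 0) by apply PI_RGT_0. apply not_0_IZR in Hk.
      intro H. apply Rmult_integral in H. destruct H as [H|H]; [lra|auto]. }
    set (F := fun t => (Re c * sin (w * t) + Im c * cos (w * t)) / w).
    replace (Re (RtoC 0)) with (minus (F 1) (F 0)).
    eapply is_RInt_ext.
    2: { apply (is_RInt_derive F (fun t => Re c * cos (w * t) - Im c * sin (w * t))).
         - intros x _. unfold F. auto_derive; auto. field. auto.
         - intros x _. apply (ex_derive_continuous (K:=R_AbsRing) (V:=R_NormedModule)). auto_derive. auto. }
    + intros x _. unfold E, cexpi, Re, Im. fold w. simpl. replace (2 * PI * IZR k * x) with (w * x) by (unfold w; ring). ring.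
    + unfold F, minus, plus, opp; simpl. rewrite Rmult_1_r, Rmult_0_r, sin_0, cos_0.
      unfold w. rewrite sin_2PIk, cos_2PIk. field. split. apply not_0_IZR; auto. apply PI_neq0.
Qed.

Lemma is_RInt_ev p : is_RInt (fun t => Re (ev p t)) 0 1 (Re (mean p)).
Proof.
  induction p as [|[k c] p IH]; simpl.
  - assert (H := is_RInt_const 0 1 0).
    rewrite (scal_zero_r (V:=R_NormedModule)) in H. exact H.

  - apply (is_RInt_plus (V:=R_NormedModule) _ _ _ _ _ _ (is_RInt_term k c) IH).
Qed.

Lemma mean_ext p q : (forall t, Re (ev p t) = Re (ev q t)) -> Re (mean p) = Re (mean q).
Proof.
  intros H.
  rewrite <- (is_RInt_unique _ _ _ _ (is_RInt_ev p)).
  rewrite <- (is_RInt_unique _ _ _ _ (is_RInt_ev q)).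
  apply RInt_ext. intros; apply H.
Qed.

Lemma mean_ge0 p : (forall t, 0 <= Re (ev p t)) -> 0 <= Re (mean p).
Proof.
  intros H.
  rewrite <- (is_RInt_unique _ _ _ _ (is_RInt_ev p)).
  apply RInt_ge_0. lra. eexists. apply is_RInt_ev. intros; apply H.
Qed.

Lemma Csum_app {T} (l1 l2 : list T) f : Csum (l1 ++ l2) f = Cplus (Csum l1 f) (Csum l2 f).
Proof. induction l1; simpl. ring. rewrite IHl1. ring. Qed.
Lemma Csum_map {T U} (l : list T) (g : T -> U) f : Csum (map g l) f = Csum l (fun x => f (g x)).
Proof. induction l; simpl; auto. rewrite IHl; auto. Qed.
Lemma Csum_flat_map {T U} (l : list T) (g : T -> list U) f :
  Csum (flat_map g l) f = Csum l (fun x => Csum (g x) f).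
Proof. induction l; simpl; auto. rewrite Csum_app, IHl; auto. Qed.
Lemma Csum_ext {T} (l : list T) f g : (forall x, In x l -> f x = g x) -> Csum l f = Csum l g.
Proof. induction l; simpl; intros H; auto. rewrite H, IHl; auto. Qed.
Lemma Csum_plus {T} (l : list T) f g : Csum l (fun x => Cplus (f x) (g x)) = Cplus (Csum l f) (Csum l g).
Proof. induction l; simpl. ring. rewrite IHl. ring. Qed.
Lemma Csum_scal {T} (l : list T) c f : Csum l (fun x => Cmult c (f x)) = Cmult c (Csum l f).
Proof. induction l; simpl. ring. rewrite IHl. ring. Qed.
Lemma Csum_zero {T} (l : list T) : Csum l (fun _ => RtoC 0) = RtoC 0.
Proof. induction l; simpl; auto. rewrite IHl. ring. Qed.
Lemma Csum_swap {T U} (l1 : list T) (l2 : list U) f :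
  Csum l1 (fun x => Csum l2 (fun y => f x y)) = Csum l2 (fun y => Csum l1 (fun x => f x y)).
Proof.
  induction l1; simpl. rewrite Csum_zero; auto.
  rewrite IHl1, <- Csum_plus. auto.
Qed.
Lemma Csum_conj {T} (l : list T) f : Cconj (Csum l f) = Csum l (fun x => Cconj (f x)).
Proof. induction l; simpl. unfold Cconj, RtoC; simpl; f_equal; ring. rewrite Cconj_plus', IHl; auto. Qed.
Lemma Re_Csum {T} (l : list T) f : Re (Csum l f) = Rsum l (fun x => Re (f x)).
Proof. induction l; simpl; auto. rewrite <- IHl. reflexivity. Qed.

Lemma mean_coef p : mean p = Csum p (fun x => if Z.eqb (fst x) 0 then snd x else RtoC 0).
Proof. induction p as [|[k c] p IH]; simpl; auto. rewrite IH; auto. Qed.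

Lemma mean_mul p q : mean (tmul p q) =
  Csum p (fun x => Csum q (fun y => if Z.eqb (fst x + fst y) 0 then Cmult (snd x) (snd y) else RtoC 0)).
Proof.
  rewrite mean_coef. unfold tmul. rewrite Csum_flat_map. apply Csum_ext. intros x _.
  rewrite Csum_map. reflexivity.
Qed.

Lemma Csum_dirac (L : list Z) (n : Z) (f : Z -> C) : NoDup L -> In n L ->
  Csum L (fun n' => if Z.eqb n' n then f n' else RtoC 0) = f n.
Proof.
  induction L as [|a L IH]; simpl; intros Hnd Hin. destruct Hin.
  inversion Hnd; subst. destruct Hin as [<-|Hin].
  - rewrite Z.eqb_refl. rewrite (Csum_ext _ _ (fun _ => RtoC 0)). rewrite Csum_zero. ring.
    intros x Hx. destruct (Z.eqb_spec x a); subst; auto. contradiction.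
  - rewrite IH; auto. destruct (Z.eqb_spec a n); subst. contradiction. ring.
Qed.

Definition ip (P Q : tp) : C :=
  Csum P (fun x => Csum Q (fun y => if Z.eqb (fst x) (fst y) then Cmult (snd x) (Cconj (snd y)) else RtoC 0)).

Lemma eqb_iff_eq a b c d : (a = b <-> c = d)%Z -> Z.eqb a b = Z.eqb c d.
Proof. intros H. destruct (Z.eqb_spec a b), (Z.eqb_spec c d); tauto. Qed.

Lemma mean_mul_conj P Q : mean (tmul P (tconj Q)) = ip P Q.
Proof.
  rewrite mean_mul. unfold ip, tconj. apply Csum_ext; intros x _. rewrite Csum_map.
  apply Csum_ext; intros y _. simpl. rewrite (eqb_iff_eq _ _ (fst x) (fst y)). reflexivity. lia.
Qed.

Lemma ip_app_l P1 P2 Q : ip (P1 ++ P2) Q = Cplus (ip P1 Q) (ip P2 Q).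
Proof. unfold ip. apply Csum_app. Qed.
Lemma ip_sym P Q : ip Q P = Cconj (ip P Q).
Proof.
  unfold ip. rewrite Csum_conj, Csum_swap. apply Csum_ext; intros x _.
  rewrite Csum_conj. apply Csum_ext; intros y _.
  rewrite (Z.eqb_sym (fst x) (fst y)). destruct (Z.eqb (fst y) (fst x)).
  rewrite Cconj_mult'. destruct (snd x), (snd y). unfold Cconj, Cmult; simpl; f_equal; ring.
  unfold Cconj, RtoC; simpl; f_equal; ring.
Qed.
Lemma ip_app_r P Q1 Q2 : ip P (Q1 ++ Q2) = Cplus (ip P Q1) (ip P Q2).
Proof. rewrite ip_sym, ip_app_l, Cconj_plus', <- !ip_sym. reflexivity. Qed.
Lemma ip_scale_l a P Q : ip (tscale a P) Q = Cmult a (ip P Q).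
Proof.
  unfold ip, tscale. rewrite Csum_map, <- Csum_scal. apply Csum_ext; intros x _.
  rewrite <- Csum_scal. apply Csum_ext; intros y _. simpl. destruct (Z.eqb _ _); ring.
Qed.
Lemma ip_scale_r a P Q : ip P (tscale a Q) = Cmult (Cconj a) (ip P Q).
Proof. rewrite ip_sym, ip_scale_l, Cconj_mult', <- ip_sym. reflexivity. Qed.

Lemma ev_normsq (z : C) : 0 <= Re (Cmult z (Cconj z)).
Proof. destruct z as [x y]. unfold Cmult, Cconj, Re; simpl. nra. Qed.

Lemma Re_conj z : Re (Cconj z) = Re z.
Proof. reflexivity. Qed.

Lemma ip_nonneg P : 0 <= Re (ip P P).
Proof.
  rewrite <- mean_mul_conj. apply mean_ge0. intros t. rewrite ev_mul, ev_conj. apply ev_normsq.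
Qed.

Lemma Rsum_ext {T} (l : list T) f g : (forall x, f x = g x) -> Rsum l f = Rsum l g.
Proof. intros H; induction l; simpl; auto. rewrite H, IHl; auto. Qed.

Lemma bessel (F : list Z) (D : Z -> C) (L : list Z) : NoDup L ->
  let pF := map (fun n => (n, D n)) F in
  let GF := tmul pF (tconj pF) in
  Rsum L (fun n => Cmod (autocorr F D n) ^ 2) <= Re (ip GF GF).
Proof.
  intros HL pF GF.
  set (c := autocorr F D).
  set (H := map (fun n => (- n, c n)%Z) L).
  set (S := Csum L (fun n => Cmult (c n) (Cconj (c n)))).
  assert (HGH : ip GF H = S).
  { unfold ip, S. rewrite Csum_swap. unfold H. rewrite Csum_map. apply Csum_ext. intros n _. simpl.
    unfold GF, tmul. rewrite Csum_flat_map.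
    unfold c at 2, autocorr. rewrite Cmult_comm, <- Csum_scal.
    unfold pF. rewrite Csum_map. apply Csum_ext. intros n1 _. simpl.
    unfold tconj. rewrite !Csum_map. rewrite <- Csum_scal. apply Csum_ext. intros n2 _. simpl.
    rewrite (eqb_iff_eq _ _ (n2 - n1) n) by lia. destruct (Z.eqb _ _); ring. }
  assert (HHH : ip H H = S).
  { unfold ip, S, H. rewrite Csum_map. apply Csum_ext. intros n Hn. rewrite Csum_map. simpl.
    rewrite <- (Csum_dirac L n (fun n' => Cmult (c n) (Cconj (c n')))) by auto.
    apply Csum_ext. intros n' _. rewrite (eqb_iff_eq _ _ n' n) by lia. reflexivity. }
  pose proof (ip_nonneg (GF ++ tscale (RtoC (-1)) H)) as Hnn.
  rewrite ip_app_l, !ip_app_r, ip_scale_l, !ip_scale_r, ip_scale_l, (ip_sym GF H), HGH, HHH in Hnn.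
  assert (HS : Re S = Rsum L (fun n => Cmod (c n) ^ 2)).
  { unfold S. rewrite Re_Csum. apply Rsum_ext.
    intros n. rewrite Cmod2_alt. destruct (c n). unfold Cmult, Cconj, Re, Im; simpl. ring. }
  fold c. rewrite <- HS. destruct S as [s1 s2]. destruct (ip GF GF) as [g1 g2].
  unfold Cplus, Cmult, Cconj, RtoC, Re in *; simpl in *. lra.
Qed.

Fixpoint pab (m : nat -> nat) (A : nat -> R) (B : nat -> C) (M k : nat) : tp * tp :=
  match k with
  | O => ((0%Z, RtoC 1) :: nil, @nil (Z * C))
  | S k' =>
    let j := (M + k' + 1)%nat in
    let mz := Z.of_nat (m j) in
    (tscale (RtoC (A j)) (fst (pab m A B M k')) ++ tscale (Cconj (B j)) (tshift (- mz) (snd (pab m A B M k'))),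
     tscale (B j) (tshift mz (fst (pab m A B M k'))) ++ tscale (RtoC (A j)) (snd (pab m A B M k')))
  end.

Lemma E0 t : E 0 t = RtoC 1.
Proof. unfold E, cexpi, RtoC. rewrite Rmult_0_r, Rmult_0_l, cos_0, sin_0. reflexivity. Qed.

Lemma E_norm k t : Re (Cmult (E k t) (Cconj (E k t))) = 1.
Proof. unfold E, cexpi, Cmult, Cconj, Re; simpl. pose proof (sin2_cos2 (2 * PI * IZR k * t)). unfold Rsqr in *. lra. Qed.

Lemma cexpi_neg x : cexpi (- x) = Cconj (cexpi x).
Proof. unfold cexpi, Cconj. rewrite cos_neg, sin_neg. reflexivity. Qed.

Ltac cfin := repeat match goal with c : C |- _ => destruct c end;
  unfold Cplus, Cmult, Cconj, RtoC, Re, Im in *; simpl in *.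

Lemma prod_repr m A B M k t :
  prod_from m A B M k t =
  Mat2 (ev (fst (pab m A B M k)) t) (ev (snd (pab m A B M k)) t)
       (Cconj (ev (snd (pab m A B M k)) t)) (Cconj (ev (fst (pab m A B M k)) t)).
Proof.
  induction k as [|k IH]; simpl.
  - unfold mat2_id. rewrite E0. f_equal; cfin; f_equal; ring.
  - rewrite IH. unfold mat2_mul, factor; simpl.
    rewrite !ev_app, !ev_scale, !ev_shift, E_opp.
    unfold E. rewrite <- INR_IZR_INZ, cexpi_neg.
    generalize (ev (fst (pab m A B M k)) t) (ev (snd (pab m A B M k)) t) (cexpi (2 * PI * INR (m (M + k + 1)%nat) * t)).
    intros a b e. f_equal; cfin; f_equal; ring.
Qed.

Lemma det_inv m A B M k t :
  (forall j, (1 <= j)%nat -> A j ^ 2 - Cmod (B j) ^ 2 = 1) ->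
  Cmod (ev (fst (pab m A B M k)) t) ^ 2 = 1 + Cmod (ev (snd (pab m A B M k)) t) ^ 2.
Proof.
  intros HAB. induction k as [|k IH]; cbn [pab fst snd].
  - cbn [ev]. rewrite E0, !Cmod2_alt. cfin. ring.
  - rewrite !ev_app, !ev_scale, !ev_shift, E_opp.
    pose proof (E_norm (Z.of_nat (m (M + k + 1)%nat)) t) as He.
    pose proof (HAB (M + k + 1)%nat ltac:(lia)) as H2.
    revert IH He H2.
    generalize (ev (fst (pab m A B M k)) t) (ev (snd (pab m A B M k)) t) (E (Z.of_nat (m (M + k + 1)%nat)) t) (B (M + k + 1)%nat).
    intros a b e Bc IH He H2. rewrite !Cmod2_alt in *. cfin. nsatz.
Qed.

Definition Kf (m : nat -> nat) (M k : nat) : Z :=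
  match k with O => 0%Z | S _ => Z.of_nat (m (M + k)%nat) end.

Definition freq_ok (m : nat -> nat) (A : nat -> R) (B : nat -> C) (M k : nat) :=
  allf (fun z => Z.min 0 (1 - Kf m M k) <= z <= 0)%Z (fst (pab m A B M k)) /\
  allf (fun z => 1 <= z <= Kf m M k)%Z (snd (pab m A B M k)).

Lemma Kf_nonneg m M k : (0 <= Kf m M k)%Z.
Proof. destruct k; simpl; lia. Qed.

Lemma freq_step m A B M k :
  let mz := Z.of_nat (m (M + k + 1)%nat) in
  (1 <= mz)%Z -> (3 * Kf m M k <= mz)%Z ->
  freq_ok m A B M k -> freq_ok m A B M (S k).
Proof.
  intros mz H1 H3 [Ha Hb]. pose proof (Kf_nonneg m M k).
  assert (HK : Kf m M (S k) = mz) by (unfold mz; simpl; f_equal; f_equal; lia).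
  unfold freq_ok. rewrite HK. cbn [pab fst snd]. fold mz. clearbody mz. split.
  - apply allf_app; apply allf_scale.
    + eapply allf_weak; [exact Ha|]. intros; cbv beta in *; lia.
    + eapply allf_shift; [exact Hb|]. intros; cbv beta in *; lia.
  - apply allf_app; apply allf_scale.
    + eapply allf_shift; [exact Ha|]. intros; cbv beta in *; lia.
    + eapply allf_weak; [exact Hb|]. intros; cbv beta in *; lia.
Qed.

Definition pa m A B M k := fst (pab m A B M k).
Definition pb m A B M k := snd (pab m A B M k).
Definition u1 m A B M k := Re (ip (pb m A B M k) (pb m A B M k)).
Definition Gk m A B M k := tmul (pb m A B M k) (tconj (pb m A B M k)).
Definition u2 m A B M k := Re (ip (Gk m A B M k) (Gk m A B M k)).

Lemma u1_rec m A B M k :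
  (forall j, (1 <= j)%nat -> A j ^ 2 - Cmod (B j) ^ 2 = 1) ->
  let j := (M + k + 1)%nat in
  let mz := Z.of_nat (m j) in
  (1 <= mz)%Z -> (3 * Kf m M k <= mz)%Z -> freq_ok m A B M k ->
  u1 m A B M (S k) = Cmod (B j) ^ 2 + (1 + 2 * Cmod (B j) ^ 2) * u1 m A B M k.
Proof.
  intros HAB j mz H1 H3 [Ha Hb]. pose proof (Kf_nonneg m M k) as HK0.
  set (K := Kf m M k) in *. clearbody K.
  set (be := Cmod (B j) ^ 2).
  set (Z1 := tscale (B j) (tshift mz (tmul (pa m A B M k) (tconj (pb m A B M k))))).
  set (Q := (0%Z, RtoC be) :: tscale (RtoC (1 + 2 * be)) (Gk m A B M k) ++ tscale (RtoC (A j)) (Z1 ++ tconj Z1)).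
  unfold u1. rewrite <- !mean_mul_conj.
  rewrite (mean_ext _ Q).
  - unfold Q. cbn [mean]. rewrite Z.eqb_refl, mean_app, !mean_scale, (mean_nz (Z1 ++ tconj Z1)).
    + unfold Gk. generalize (mean (tmul (pb m A B M k) (tconj (pb m A B M k)))). intros; cfin. ring.
    + assert (HZ : allf (fun z => mz + Z.min 0 (1 - K) - K <= z)%Z Z1).
      { apply allf_scale. apply (allf_shift (fun z => (Z.min 0 (1 - K) - K <= z)%Z)).
        apply (allf_mul (fun z => (Z.min 0 (1 - K) <= z <= 0)%Z) (fun z => (-K <= z <= -1)%Z)). exact Ha.
        apply (allf_conj _ _ _ Hb). intros; cbv beta in *; lia.
        intros; cbv beta in *; lia. intros; cbv beta in *; lia. }
      apply allf_app. eapply allf_weak. exact HZ. intros; cbv beta in *; lia.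
      apply (allf_conj _ _ _ HZ). intros; cbv beta in *; lia.
  - intros t. unfold Q, Z1, Gk, pb, pa. cbn [pab fst snd ev]. fold j mz.
    repeat progress (rewrite ?ev_app, ?ev_scale, ?ev_mul, ?ev_conj, ?ev_shift, ?E0).
    pose proof (E_norm mz t) as He.
    pose proof (HAB j ltac:(unfold j; lia)) as H2.
    pose proof (det_inv m A B M k t HAB) as Hd. unfold be in *. clear Q Z1 be.
    revert He H2 Hd.
    generalize (ev (fst (pab m A B M k)) t) (ev (snd (pab m A B M k)) t) (E mz t) (B j) (A j).
    intros a b e Bc Aj He H2 Hd. rewrite !Cmod2_alt in *. cfin. nsatz.
Qed.

Lemma u2_rec m A B M k :
  (forall j, (1 <= j)%nat -> A j ^ 2 - Cmod (B j) ^ 2 = 1) ->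
  let j := (M + k + 1)%nat in
  let mz := Z.of_nat (m j) in
  (1 <= mz)%Z -> (3 * Kf m M k <= mz)%Z -> freq_ok m A B M k ->
  let be := Cmod (B j) ^ 2 in
  u2 m A B M (S k) = be ^ 2 + (4 * be + 6 * be ^ 2) * u1 m A B M k
                     + (1 + 6 * be + 6 * be ^ 2) * u2 m A B M k.
Proof.
  intros HAB j mz H1 H3 [Ha Hb] be. pose proof (Kf_nonneg m M k) as HK0.
  set (K := Kf m M k) in *. clearbody K.
  set (Z1 := tscale (B j) (tshift mz (tmul (pa m A B M k) (tconj (pb m A B M k))))).
  set (G := Gk m A B M k).
  set (X := tscale (RtoC be) (tmul (pa m A B M k) (tconj (pa m A B M k))) ++ tscale (RtoC (A j ^ 2)) G).
  set (R2 := tscale (RtoC (2 * A j)) (tmul X (Z1 ++ tconj Z1)) ++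
             tscale (RtoC (A j ^ 2)) (tmul Z1 Z1 ++ tmul (tconj Z1) (tconj Z1))).
  set (Q := (0%Z, RtoC (be ^ 2)) :: tscale (RtoC (4 * be + 6 * be ^ 2)) G ++
            tscale (RtoC (1 + 6 * be + 6 * be ^ 2)) (tmul G (tconj G)) ++ R2).
  unfold u2, u1. rewrite <- !mean_mul_conj.
  rewrite (mean_ext _ Q).
  - unfold Q. cbn [mean]. rewrite Z.eqb_refl, !mean_app, !mean_scale, (mean_nz R2).
    + unfold G, Gk. generalize (mean (tmul (pb m A B M k) (tconj (pb m A B M k)))).
      generalize (mean (tmul (tmul (pb m A B M k) (tconj (pb m A B M k))) (tconj (tmul (pb m A B M k) (tconj (pb m A B M k)))))).
      intros; cfin. ring.
    + assert (HZ : allf (fun z => mz + Z.min 0 (1 - K) - K <= z)%Z Z1).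
      { apply allf_scale. apply (allf_shift (fun z => (Z.min 0 (1 - K) - K <= z)%Z)).
        apply (allf_mul (fun z => (Z.min 0 (1 - K) <= z <= 0)%Z) (fun z => (-K <= z <= -1)%Z)). exact Ha.
        apply (allf_conj _ _ _ Hb). intros; cbv beta in *; lia.
        intros; cbv beta in *; lia. intros; cbv beta in *; lia. }
      assert (HZc : allf (fun z => z <= - (mz + Z.min 0 (1 - K) - K))%Z (tconj Z1)).
      { apply (allf_conj _ _ _ HZ). intros; cbv beta in *; lia. }
      assert (HX : allf (fun z => Z.min 0 (1 - K) <= z <= - Z.min 0 (1 - K))%Z X).
      { apply allf_app; apply allf_scale.
        apply (allf_mul (fun z => (Z.min 0 (1 - K) <= z <= 0)%Z) (fun z => (0 <= z <= - Z.min 0 (1 - K))%Z)).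
        exact Ha. apply (allf_conj _ _ _ Ha). intros; cbv beta in *; lia. intros; cbv beta in *; lia.
        apply (allf_mul (fun z => (1 <= z <= K)%Z) (fun z => (-K <= z <= -1)%Z)).
        exact Hb. apply (allf_conj _ _ _ Hb). intros; cbv beta in *; lia. intros; cbv beta in *; lia. }
      unfold R2. apply allf_app; apply allf_scale.
      * apply (allf_mul _ (fun z => z <= - (mz + Z.min 0 (1 - K) - K) \/ mz + Z.min 0 (1 - K) - K <= z)%Z _ _ _ HX).
        apply allf_app. eapply allf_weak. exact HZ. intros; cbv beta in *; lia.
        eapply allf_weak. exact HZc. intros; cbv beta in *; lia.
        intros; cbv beta in *; lia.
      * apply allf_app.
        apply (allf_mul _ _ _ _ _ HZ HZ). intros; cbv beta in *; lia.
        apply (allf_mul _ _ _ _ _ HZc HZc). intros; cbv beta in *; lia.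
  - intros t. unfold Q, R2, X, Z1, G, Gk, pb, pa. cbn [pab fst snd ev]. fold j mz.
    repeat progress (rewrite ?ev_app, ?ev_scale, ?ev_mul, ?ev_conj, ?ev_shift, ?E0).
    pose proof (E_norm mz t) as He.
    pose proof (HAB j ltac:(unfold j; lia)) as H2.
    pose proof (det_inv m A B M k t HAB) as Hd. unfold be in *. clear Q Z1 be R2 X G.
    revert He H2 Hd.
    generalize (ev (fst (pab m A B M k)) t) (ev (snd (pab m A B M k)) t) (E mz t) (B j) (A j).
    intros a b e Bc Aj He H2 Hd. rewrite !Cmod2_alt in *. cfin. nsatz.
Qed.

Lemma conds m (q : R) M k :
  3 <= q ->
  (forall j, (1 <= j)%nat -> (0 < m j)%nat) ->
  (forall j, (1 <= j)%nat -> q * INR (m j) <= INR (m (S j))) ->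
  (1 <= Z.of_nat (m (M + k + 1)%nat))%Z /\ (3 * Kf m M k <= Z.of_nat (m (M + k + 1)%nat))%Z.
Proof.
  intros hq hpos hlac. split.
  - pose proof (hpos (M + k + 1)%nat ltac:(lia)). lia.
  - destruct k as [|k]; simpl Kf. pose proof (hpos (M + 0 + 1)%nat ltac:(lia)); lia.
    pose proof (hlac (M + S k)%nat ltac:(lia)) as H.
    replace (S (M + S k)) with (M + S k + 1)%nat in H by lia.
    assert (H0 : 0 <= INR (m (M + S k)%nat)) by apply pos_INR.
    assert (H' : INR (3 * m (M + S k)%nat) <= INR (m (M + S k + 1)%nat)).
    { rewrite mult_INR. simpl (INR 3). nra. }
    apply INR_le in H'. lia.
Qed.

Lemma freq_all m A B (q : R) M k :
  3 <= q ->
  (forall j, (1 <= j)%nat -> (0 < m j)%nat) ->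
  (forall j, (1 <= j)%nat -> q * INR (m j) <= INR (m (S j))) ->
  freq_ok m A B M k.
Proof.
  intros hq hpos hlac. induction k as [|k IH].
  - split; intros x Hx; simpl in Hx.
    + destruct Hx as [<-|[]]. simpl. lia.
    + destruct Hx.
  - destruct (conds m q M k hq hpos hlac). apply freq_step; auto.
Qed.

Definition Sk (B : nat -> C) (M k : nat) := Rsum (seq (S M) k) (fun j => Cmod (B j) ^ 2).

Lemma Rsum_app {T} (l1 l2 : list T) f : Rsum (l1 ++ l2) f = Rsum l1 f + Rsum l2 f.
Proof. induction l1; simpl. ring. rewrite IHl1. ring. Qed.

Lemma Sk_S B M k : Sk B M (S k) = Sk B M k + Cmod (B (M + k + 1)%nat) ^ 2.
Proof.
  unfold Sk. rewrite seq_S, Rsum_app. simpl. replace (S (M + k)) with (M + k + 1)%nat by lia. ring.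
Qed.

Lemma exp_bound be : 0 <= be -> 1 + 6 * be + 6 * be ^ 2 <= exp (8 * be).
Proof.
  intros H. replace (8 * be) with (4 * be + 4 * be) by ring. rewrite exp_plus.
  pose proof (exp_ineq1_le (4 * be)). nra.
Qed.

Lemma V_bound m A B (q : R) M k :
  3 <= q ->
  (forall j, (1 <= j)%nat -> (0 < m j)%nat) ->
  (forall j, (1 <= j)%nat -> q * INR (m j) <= INR (m (S j))) ->
  (forall j, (1 <= j)%nat -> A j ^ 2 - Cmod (B j) ^ 2 = 1) ->
  u2 m A B M k + u1 m A B M k + 1 / 6 <= exp (8 * Sk B M k) / 6.
Proof.
  intros hq hpos hlac HAB. induction k as [|k IH].
  - unfold u2, u1, Gk, pb, ip, Sk. simpl. rewrite Rmult_0_r, exp_0. lra.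
  - destruct (conds m q M k hq hpos hlac) as [C1 C3].
    pose proof (freq_all m A B q M k hq hpos hlac) as Hf.
    rewrite (u1_rec m A B M k HAB C1 C3 Hf), (u2_rec m A B M k HAB C1 C3 Hf), Sk_S.
    set (be := Cmod (B (M + k + 1)%nat) ^ 2).
    assert (Hbe : 0 <= be) by (unfold be; apply pow2_ge_0).
    pose proof (exp_bound be Hbe) as Hr.
    assert (H1 : 0 <= u1 m A B M k) by apply ip_nonneg.
    assert (H2 : 0 <= u2 m A B M k) by apply ip_nonneg.
    rewrite Rmult_plus_distr_l, exp_plus.
    pose proof (exp_pos (8 * Sk B M k)).
    assert (Hv : u2 m A B M k + u1 m A B M k + 1/6 >= 0) by lra.
    transitivity ((1 + 6 * be + 6 * be ^ 2) * (u2 m A B M k + u1 m A B M k + 1 / 6)).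
    + right. field.
    + transitivity ((1 + 6 * be + 6 * be ^ 2) * (exp (8 * Sk B M k) / 6)).
      * apply Rmult_le_compat_l. nra. exact IH.
      * assert (exp (8 * Sk B M k) / 6 >= 0) by lra. 
        replace (exp (8 * Sk B M k) * exp (8 * be) / 6) with (exp (8 * be) * (exp (8 * Sk B M k) / 6)) by (field).
        apply Rmult_le_compat_r; lra.
Qed.

Lemma ev_pF F D t : ev (map (fun n => (n, D n)) F) t = Csum F (fun n => Cmult (D n) (cexpi (2 * PI * IZR n * t))).
Proof. induction F; simpl; auto. rewrite IHF. reflexivity. Qed.

Theorem lemma3p2
  (m : nat -> nat) (q : R) (A : nat -> R) (B : nat -> C) (M N : nat)
  (hq : 3 <= q)
  (hm_pos : forall j, (1 <= j)%nat -> (0 < m j)%nat)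
  (hm_incr : forall j, (1 <= j)%nat -> (m j < m (S j))%nat)
  (hm_lac : forall j, (1 <= j)%nat -> q * INR (m j) <= INR (m (S j)))
  (hA : forall j, (1 <= j)%nat -> 0 < A j)
  (hAB : forall j, (1 <= j)%nat -> A j ^ 2 - Cmod (B j) ^ 2 = 1)
  (hMN : (M < N)%nat)
  (F : list Z) (D : Z -> C)
  (hF_nodup : NoDup F)
  (hF_supp : forall n, In n F <-> D n <> RtoC 0)
  (hb : forall t : R,
      b_MN m A B M N t = Csum F (fun n => Cmult (D n) (cexpi (2 * PI * IZR n * t)))) :
  forall L : list Z, NoDup L ->
    Rsum L (fun n => Cmod (autocorr F D n) ^ 2) <= exp (8 * sumB2 B M N).
Proof.
  intros L HL.
  eapply Rle_trans. apply (bessel F D L HL).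
  set (pF := map (fun n => (n, D n)) F).
  assert (Heq : Re (ip (tmul pF (tconj pF)) (tmul pF (tconj pF))) = u2 m A B M (N - M)).
  { unfold u2, Gk. rewrite <- !mean_mul_conj. apply mean_ext. intros t.
    rewrite !ev_mul, !ev_conj, !ev_mul, !ev_conj.
    assert (E1 : ev pF t = ev (pb m A B M (N - M)) t).
    { unfold pF. rewrite ev_pF, <- hb. unfold b_MN. rewrite prod_repr. reflexivity. }
    rewrite E1. reflexivity. }
  rewrite Heq.
  pose proof (V_bound m A B q M (N - M) hq hm_pos hm_lac hAB) as HV.
  assert (H1 : 0 <= u1 m A B M (N - M)) by apply ip_nonneg.
  pose proof (exp_pos (8 * Sk B M (N - M))).
  unfold sumB2. fold (Sk B M (N - M)). lra.
Qed.
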